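(* Let $K$ be a field, let $L\in K^{n\times n}[s]$, $L_1\in K^{n_1\times n_1}[s]$ be nonsingular polynomial matrices, let $\Theta,\Theta_1\in K^{n_1\times n}_\infty(s)$ satisfy $\Theta L=L_1\Theta_1$, and let $\phi:U^L\to U^{L_1}$ be the $K_\infty(s)$-module homomorphism given by $\phi(\rho^Lx)=\rho^{L_1}(\Theta x)$, $x\in K^n_\infty(s)$. Then: (i) $\phi$ is surjective if and only if there exist proper rational matrices $C\in K^{n\times n_1}_\infty(s)$, $D\in K^{n_1\times n_1}_\infty(s)$ with $\Theta C+s^{-1}L_1D=I_{n_1}$; (ii) $\phi$ is injective if and only if there exist proper rational matrices $C\in K^{n_1\times n}_\infty(s)$, $D\in K^{n\times n}_\infty(s)$ with $C\Theta_1+D\,s^{-1}L=I_n$ (equivalently, $\Theta_1^TC^T+s^{-1}L^TD^T=I_n$).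
   Context: $K(s)$ denotes the field of rational functions over $K$. A rational function $f$ is proper if $f=0$ or $f=p/q$ with $p,q\in K[s]$, $q\ne0$, $\deg p\le\deg q$; $K_\infty(s)$ is the ring of proper rational functions, and $K^n_\infty(s)$, $K^{m\times r}_\infty(s)$ denote vectors/matrices with proper rational entries. One has $K(s)=K[s]\oplus s^{-1}K_\infty(s)$; $\pi_+:K(s)\to K[s]$ denotes the projection onto the polynomial part along $s^{-1}K_\infty(s)$, extended entrywise to vectors and matrices. For a nonsingular $M\in K^{m\times m}[s]$, define $\rho^M:K^m_\infty(s)\to K^m[s]$ by $\rho^M x=M\,\pi_+(M^{-1}x)$ and $U^M=\operatorname{Im}\rho^M$, a $K_\infty(s)$-module via $q\cdot\rho^Mx=\rho^M(qx)$ (well defined since $\operatorname{Ker}\rho^M=K^m_\infty(s)\cap s^{-1}MK^m_\infty(s)$). *)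

(* Defs.v *)
From HB Require Import structures.
From mathcomp Require Import all_boot all_order all_algebra.
Set Implicit Arguments. Unset Strict Implicit. Unset Printing Implicit Defensive.
Import GRing.Theory.
Local Open Scope ring_scope.

Notation ratf K := {fraction {poly K}}.

Section Defs.
Variable K : fieldType.
Local Notation F := (ratf K).

Definition sF : F := tofrac 'X.

(* f is proper: f = 0 or f = p/q with q <> 0 and deg p <= deg q
   (for q <> 0, deg p <= deg q iff size p <= size q, also when p = 0). *)
Definition proper (f : F) : Prop :=
  f = 0 \/ exists p q : {poly K}, q != 0 /\ (size p <= size q)%N /\
                                 f = tofrac p / tofrac q.

Definition properMx m r (A : 'M[F]_(m, r)) : Prop := forall i j, proper (A i j).

(* pi_+ : polynomial part of a rational function.  For any representation
   f = p/q (q <> 0), the polynomial part along s^{-1}K_oo(s) is p %/ q;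
   we use the canonical representative of the fraction. *)
Definition pi_plus (f : F) : {poly K} :=
  let r := repr f in (\n_r %/ \d_r)%R.

Definition polyF m r (M : 'M[{poly K}]_(m, r)) : 'M[F]_(m, r) := map_mx (fun p : {poly K} => tofrac p) M.

Definition rho m (M : 'M[{poly K}]_m) (x : 'cV[F]_m) : 'cV[{poly K}]_m :=
  M *m map_mx pi_plus (invmx (polyF M) *m x).
End Defs.

(* Main.v *)
Require Import Defs.
From HB Require Import structures.
From mathcomp Require Import all_boot all_order all_algebra.
From mathcomp Require Import zify ring.
From Stdlib Require Import Classical.
Import GRing.Theory.
Set Implicit Arguments. Unset Strict Implicit. Unset Printing Implicit Defensive.
Local Open Scope ring_scope.
Section S.
Variable K : fieldType.
Local Notation F := {fraction {poly K}}.
Local Notation tF := (@tofrac _).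
Local Notation s := (sF K).
Local Notation proper := (@Defs.proper K).

Lemma tF_neq0 (q : {poly K}) : q != 0 -> tF q != 0 :> F.
Proof. by rewrite tofrac_eq0. Qed.

Lemma prI (p q : {poly K}) : q != 0 -> (size p <= size q)%N -> proper (tF p / tF q : F).
Proof. by move=> q0 le; right; exists p, q. Qed.

Lemma pr0 : proper (0 : F). Proof. by left. Qed.

Lemma prC (c : K) : proper (tF c%:P : F).
Proof.
apply/(eq_ind _ proper (@prI c%:P 1 _ _)); first by rewrite oner_eq0.
  by rewrite size_polyC size_poly1; case: (c != 0).
by rewrite tofrac1 divr1.
Qed.

Lemma prD (f g : F) : proper f -> proper g -> proper (f + g).
Proof.
case=> [->|[p [q [q0 [le ->]]]]]; first by rewrite add0r.
case=> [->|[p' [q' [q0' [le' ->]]]]]; first by rewrite addr0; right; exists p, q.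
have -> : tF p / tF q + tF p' / tF q' = tF (p * q' + p' * q) / tF (q * q') :> F.
  rewrite tofracD !tofracM addf_div // tF_neq0 //.
apply: prI; first by rewrite mulf_neq0.
rewrite size_mul //.
have := size_add (p * q') (p' * q).
have := size_mul_leq p q'; have := size_mul_leq p' q.
have : (0 < size q)%N by rewrite size_poly_gt0.
have : (0 < size q')%N by rewrite size_poly_gt0.
move=> h1 h2 h3 h4 h5. rewrite -!subn1 in h3 h4 *. apply: (leq_trans h5); rewrite geq_max; apply/andP; split; [apply: (leq_trans h4) | apply: (leq_trans h3)].
  by rewrite leq_sub2r // leq_add2r. by rewrite leq_sub2r // addnC leq_add2l.
Qed.

Lemma prN (f : F) : proper f -> proper (- f).
Proof.
case=> [->|[p [q [q0 [le ->]]]]]; first by rewrite oppr0; left.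
by rewrite -mulNr -tofracN; apply: prI; rewrite ?size_polyN.
Qed.

Lemma prM (f g : F) : proper f -> proper g -> proper (f * g).
Proof.
case=> [->|[p [q [q0 [le ->]]]]]; first by rewrite mul0r; left.
case=> [->|[p' [q' [q0' [le' ->]]]]]; first by rewrite mulr0; left.
have -> : tF p / tF q * (tF p' / tF q') = tF (p * p') / tF (q * q') :> F.
  by rewrite !tofracM invfM mulrACA.
apply: prI; first by rewrite mulf_neq0.
apply: (leq_trans (size_mul_leq p p')); rewrite size_mul // -!subn1 leq_sub2r // leq_add //.
Qed.
End S.
Section S.
Variable K : fieldType.
Local Notation F := {fraction {poly K}}.
Local Notation tF := (@tofrac _).
Local Notation s := (sF K).
Local Notation proper := (@Defs.proper K).

Lemma pr1 : proper 1.
Proof. by have := prC (1 : K); rewrite polyC1 tofrac1. Qed.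

Lemma prB (f g : F) : proper f -> proper g -> proper (f - g).
Proof. by move=> hf hg; apply: prD => //; apply: prN. Qed.

Lemma pr_sum (I : Type) (r : seq I) (P : pred I) (G : I -> F) :
  (forall i, P i -> proper (G i)) -> proper (\sum_(i <- r | P i) G i).
Proof. by move=> h; apply: (big_ind proper) => //; [exact: pr0 | exact: prD]. Qed.

Lemma pmx_mul m k r (A : 'M[F]_(m, k)) (B : 'M_(k, r)) :
  properMx A -> properMx B -> properMx (A *m B).
Proof. by move=> hA hB i j; rewrite mxE; apply: pr_sum => l _; apply: prM. Qed.

Lemma pmx_add m r (A B : 'M[F]_(m, r)) :
  properMx A -> properMx B -> properMx (A + B).
Proof. by move=> hA hB i j; rewrite mxE; apply: prD. Qed.

Lemma pmx_opp m r (A : 'M[F]_(m, r)) : properMx A -> properMx (- A).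
Proof. by move=> hA i j; rewrite mxE; apply: prN. Qed.

Lemma pmx_sub m r (A B : 'M[F]_(m, r)) :
  properMx A -> properMx B -> properMx (A - B).
Proof. by move=> hA hB; apply: pmx_add => //; apply: pmx_opp. Qed.

Lemma pmx_scale m r c (A : 'M[F]_(m, r)) :
  proper c -> properMx A -> properMx (c *: A).
Proof. by move=> hc hA i j; rewrite mxE; apply: prM. Qed.

Lemma pmx0 m r : properMx (0 : 'M[F]_(m, r)).
Proof. by move=> i j; rewrite mxE; apply: pr0. Qed.

Lemma pmx1 m : properMx (1%:M : 'M[F]_m).
Proof. by move=> i j; rewrite mxE; case: (i == j); [apply: pr1 | apply: pr0]. Qed.

Lemma pmx_delta m r i j : properMx (delta_mx i j : 'M[F]_(m, r)).
Proof. by move=> k l; rewrite mxE; case: (_ && _); [apply: pr1 | apply: pr0]. Qed.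

Lemma s_neq0 : s != 0.
Proof. by rewrite /sF tofrac_eq0 polyX_eq0. Qed.

Lemma proper_sinv : proper s^-1.
Proof.
have -> : s^-1 = tF 1 / tF 'X by rewrite tofrac1 div1r.
by apply: prI; rewrite ?polyX_eq0 // size_poly1 size_polyX.
Qed.

Definition sprop (f : F) := proper (s * f).

Lemma sprop_proper f : sprop f -> proper f.
Proof. move=> h; rewrite -[f]mul1r -(mulVf s_neq0) -mulrA.
by apply: prM; [exact: proper_sinv | exact: h]. Qed.

Lemma sprop_sinv f : proper f -> sprop (s^-1 * f).
Proof. by move=> h; rewrite /sprop mulrA mulfV ?s_neq0 // mul1r. Qed.

Lemma spropB f g : sprop f -> sprop g -> sprop (f - g).
Proof. by rewrite /sprop mulrBr; apply: prB. Qed.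

Lemma sprop_frac (p q : {poly K}) : q != 0 -> (size p < size q)%N ->
  sprop (tF p / tF q).
Proof.
move=> q0 lt; rewrite /sprop mulrA /sF -tofracM.
have [->|p0] := eqVneq p 0; first by rewrite mulr0 tofrac0 mul0r; apply: pr0.
apply: prI => //; by rewrite mulrC size_mulX.
Qed.

Lemma nat_aux a b : (0 < b)%N -> ((a + b).-1 <= b)%N -> (a <= 1)%N.
Proof. lia. Qed.

Lemma proper_poly_size (b : {poly K}) : proper (tF b) -> (size b <= 1)%N.
Proof.
case=> [/eqP|[p [q [q0 [le e]]]]]; first by rewrite tofrac_eq0 => /eqP ->; rewrite size_poly0.
have [->|b0] := eqVneq b 0; first by rewrite size_poly0.
have e2 : tF (b * q) = tF p by rewrite tofracM e mulfVK // tofrac_eq0.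
move/eqP: e2; rewrite tofrac_eq => /eqP e2.
apply: (@nat_aux _ (size q)); first by rewrite size_poly_gt0.
by rewrite -size_mul // e2.
Qed.

Lemma sprop_poly (a : {poly K}) : sprop (tF a) -> a = 0.
Proof.
rewrite /sprop /sF -tofracM => /proper_poly_size.
have [->//|a0] := eqVneq a 0.
rewrite mulrC size_mulX //; have := size_poly_gt0 a; rewrite a0 /=; lia.
Qed.

Lemma sprop0 : sprop 0.
Proof. by rewrite /sprop mulr0; apply: pr0. Qed.

Lemma frac_repr (f : F) : f = tF (\n_(repr f)) / tF (\d_(repr f)).
Proof.
have dn := denom_ratioP (repr f).
apply: (canRL (mulfK _)); first by rewrite tofrac_eq0.
rewrite -{1}[f]reprK.
move: (repr f) dn => r dn.
unlock tofrac.
rewrite -[_ * _]/(FracField.mul _ _).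
rewrite -FracField.pi_mul.
apply/eqmodP; rewrite /= FracField.equivfE /FracField.mulf !numden_Ratio ?mulf_neq0 ?oner_eq0 //.
by rewrite !mulr1 mulrC.
Qed.

Lemma pi_plus_spec f : sprop (f - tF (pi_plus f)).
Proof.
rewrite /pi_plus {1}(frac_repr f).
have d0 := denom_ratioP (repr f).
move: (\n_(repr f)) (\d_(repr f)) d0 => nn dd d0.
rewrite {1}(divp_eq nn dd) tofracD tofracM mulrDl mulfK ?tofrac_eq0 //.
rewrite addrAC subrr add0r; apply: sprop_frac => //.
by rewrite ltn_modp.
Qed.

Lemma zaux (V : comRingType) (a b c d : V) : a - b - (c - d) = (a - c) - (b - d).
Proof. ring. Qed.
Lemma zaux2 (V : comRingType) (x y z : V) : (x - y) - (x - z) = z - y.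
Proof. ring. Qed.

Lemma pi_plus_uniq f a : sprop (f - tF a) -> pi_plus f = a.
Proof.
move=> h; apply/eqP; rewrite -subr_eq0; apply/eqP; apply: sprop_poly.
have := spropB h (pi_plus_spec f).
by rewrite zaux2 tofracB.
Qed.

Lemma pi_plusB (f g : F) : pi_plus (f - g) = pi_plus f - pi_plus g.
Proof.
apply: pi_plus_uniq; rewrite tofracB -zaux.
exact: spropB (pi_plus_spec f) (pi_plus_spec g).
Qed.

Lemma pi_plus_eq0 (f : F) : pi_plus f = 0 <-> sprop f.
Proof.
split=> [e|h]; last by apply: pi_plus_uniq; rewrite tofrac0 subr0.
by have := pi_plus_spec f; rewrite e tofrac0 subr0.
Qed.

Lemma pi_plus0 : pi_plus (0 : F) = 0.
Proof. by apply/(@pi_plus_eq0 0); apply: sprop0. Qed.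
End S.
Section S.
Variable K : fieldType.
Local Notation F := {fraction {poly K}}.
Local Notation tF := (@tofrac _).
Local Notation s := (sF K).
Local Notation proper := (@Defs.proper K).

Lemma polyF_unit m (M : 'M[{poly K}]_m) : \det M != 0 -> polyF M \in unitmx.
Proof. by move=> h; rewrite unitmxE unitfE /polyF det_map_mx tofrac_eq0. Qed.

Lemma polyF_mul m k r (A : 'M[{poly K}]_(m, k)) (B : 'M_(k, r)) :
  polyF (A *m B) = polyF A *m polyF B.
Proof. by rewrite /polyF map_mxM. Qed.

Lemma polyF_inj m (M : 'M[{poly K}]_m) r (w : 'M[{poly K}]_(m, r)) :
  \det M != 0 -> M *m w = 0 -> w = 0.
Proof.
move=> dM e; have U := polyF_unit dM.
have : polyF (M *m w) = 0 by rewrite e; apply/matrixP=> i j; rewrite !mxE tofrac0.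
rewrite polyF_mul => /(congr1 (mulmx (invmx (polyF M)))).
rewrite mulmxA mulVmx // mul1mx mulmx0 => /matrixP h.
apply/matrixP => i j; move: (h i j); rewrite !mxE => /eqP; rewrite tofrac_eq0 => /eqP -> //.
Qed.

Lemma rhoB m (M : 'M[{poly K}]_m) (x y : 'cV[F]_m) :
  rho M (x - y) = rho M x - rho M y.
Proof.
rewrite /rho -mulmxBr; congr (_ *m _); rewrite mulmxBr.
by apply/matrixP=> i j; rewrite !mxE pi_plusB.
Qed.

Lemma rho0 m (M : 'M[{poly K}]_m) : rho M 0 = 0.
Proof. by have := rhoB M 0 0; rewrite subrr => ->; rewrite subrr. Qed.

Definition spropMx m r (A : 'M[F]_(m, r)) := properMx (s *: A).

Lemma rho_eq0 m (M : 'M[{poly K}]_m) (x : 'cV[F]_m) : \det M != 0 ->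
  rho M x = 0 <-> spropMx (invmx (polyF M) *m x).
Proof.
move=> dM; split=> [e|h].
  have /matrixP h := polyF_inj dM e; move=> i j.
  move: (h i j); rewrite !mxE => /pi_plus_eq0.
  by [].
rewrite /rho; have -> : map_mx (@pi_plus K) (invmx (polyF M) *m x) = 0; last by rewrite mulmx0.
apply/matrixP=> i j; rewrite !mxE; apply/pi_plus_eq0; rewrite /spropMx /properMx in h; have := h i j; rewrite mxE [(_ *m _) i j]mxE; exact.
Qed.

Lemma proper_or_inv (f : F) : proper f \/ proper f^-1.
Proof.
rewrite (frac_repr f); have d0 := denom_ratioP (repr f).
move: (\n_ _) (\d_ _) d0 => p q q0.
have [le|lt] := leqP (size p) (size q); first by left; apply: prI.
right; rewrite invf_div; apply: prI; last exact: ltnW.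
by rewrite -size_poly_gt0; apply: leq_ltn_trans lt.
Qed.
Lemma pivot_seq (I : eqType) (sq : seq I) (h : I -> F) :
  has (fun i => h i != 0) sq ->
  exists2 j, j \in sq & h j != 0 /\ forall k, k \in sq -> proper (h k / h j).
Proof.
elim: sq => [//|i sq IH] /=.
case: (boolP (has (fun i => h i != 0) sq)) => [hs _ | hs hi].
  have [j js [hj0 hj]] := IH hs.
  have [hi0|hi0] := eqVneq (h i) 0.
    exists j; first by rewrite inE js orbT.
    split=> // k; rewrite inE => /orP [/eqP->|]; last exact: hj.
    by rewrite hi0 mul0r; apply: pr0.
  have [pij|pji] := proper_or_inv (h i / h j).
    exists j; first by rewrite inE js orbT.
    by split=> // k; rewrite inE => /orP [/eqP->//|]; exact: hj.
  exists i; first by rewrite inE eqxx.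
  split=> // k; rewrite inE => /orP [/eqP->|ks].
    by rewrite divff //; exact: (@pr1 K).
  rewrite invf_div in pji.
  have -> : h k / h i = (h k / h j) * (h j / h i) by rewrite mulrA (divfK hj0).
  exact: (prM (hj k ks) pji).
rewrite orbF in hi.
exists i; first by rewrite inE eqxx.
split=> // k; rewrite inE => /orP [/eqP->|ks]; first by rewrite divff //; exact: (@pr1 K).
move/hasPn: hs => /(_ k ks); rewrite negbK => /eqP ->; rewrite mul0r; exact: (@pr0 K).
Qed.
End S.

Lemma scal_aux (R : fieldType) (a : R) : a != 0 ->
  - (a * (1 - a^-1) * (1 + (a^-1 - 1))) = a^-1 - 1.
Proof. move=> a0; field. exact: a0. Qed.

Section S.
Variable K : fieldType.
Local Notation F := {fraction {poly K}}.
Local Notation s := (sF K).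
Local Notation proper := (@Defs.proper K).

Lemma pmx_col_mx m1 m2 r (A : 'M[F]_(m1, r)) (B : 'M_(m2, r)) :
  properMx A -> properMx B -> properMx (col_mx A B).
Proof. move=> hA hB i j; rewrite mxE; case: (split i) => l; [exact: hA | exact: hB]. Qed.

Lemma pmx_row_mx m r1 r2 (A : 'M[F]_(m, r1)) (B : 'M_(m, r2)) :
  properMx A -> properMx B -> properMx (row_mx A B).
Proof. move=> hA hB i j; rewrite mxE; case: (split j) => l; [exact: hA | exact: hB]. Qed.

Lemma claim m n k (R : 'M[F]_(k, n)) (T : 'M[F]_(m, n)) :
  (forall x : 'cV[F]_n, properMx x -> properMx (R *m x) -> properMx (T *m x)) ->
  exists C : 'M[F]_(m, k), properMx C /\ properMx (T - C *m R).
Proof.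
elim: k R T => [|k IH] R T H.
  exists 0; split; first exact: pmx0.
  rewrite mul0mx subr0 => i j.
  have h0 : properMx (R *m (delta_mx j 0 : 'cV[F]_n)).
    by move=> i0; have := ltn_ord i0; rewrite ltn0.
  by move: (H _ (@pmx_delta K n 1 j 0) h0 i 0); rewrite -colE mxE.
have eR : R = col_mx (usubmx (R : 'M_(1 + k, n))) (dsubmx (R : 'M_(1 + k, n))).
  by rewrite vsubmxK.
move: (usubmx _) (dsubmx _) eR => r R' eR; rewrite {}eR in H *.
have H' : forall x : 'cV[F]_n, properMx x -> properMx (r *m x) -> properMx (R' *m x) ->
    properMx (T *m x).
  move=> x hx h1 h2; apply: H => //. rewrite (mul_col_mx r R' x). exact (pmx_col_mx h1 h2).
case: (classic (properMx r)) => [pr | npr].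
  have [C' [hC' hE]] := IH R' T (fun x hx h2 => H' x hx (pmx_mul pr hx) h2).
  exists (row_mx (0 : 'cV[F]_m) C'); split; first exact (pmx_row_mx (@pmx0 K m 1) hC').
  by rewrite (mul_row_col (0 : 'cV[F]_m) C' r R') mul0mx add0r.
have [i0 [j0 nr]] : exists i0 j0, ~ proper (r i0 j0).
  apply: NNPP => hn; apply: npr => i0 j0; apply: NNPP => hh; apply: hn; by exists i0, j0.
rewrite (ord1 i0) in nr.
have hh : has (fun j => r 0 j != 0) (enum 'I_n).
  apply/hasP; exists j0; first by rewrite mem_enum.
  by apply/negP => /eqP e; apply: nr; rewrite e; exact: (@pr0 K).
have [j _ [a0 hj]] := @pivot_seq K _ (enum 'I_n) (fun j => r 0 j) hh.
have hj' : forall k, proper (r 0 k / r 0 j) by move=> k0; apply: hj; rewrite mem_enum.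
move: a0 hj'; set a := r 0 j => a0 hj'; clear hj.
have na : ~ proper a.
  move=> pa; apply: nr; rewrite -[r 0 j0](divfK a0); exact: (prM (hj' j0) pa).
have pd : proper a^-1 by case: (proper_or_inv a).
pose u : 'cV[F]_n := delta_mx j 0.
have eu : u = delta_mx j 0 by []. clearbody u.
pose w : 'rV[F]_n := a^-1 *: r - u^T.
have ew : w = a^-1 *: r - u^T by []. clearbody w.
pose V : 'M[F]_n := 1%:M - u *m w.
have eV : V = 1%:M - u *m w by []. clearbody V.
pose Vi : 'M[F]_n := 1%:M + u *m w.
have eVi : Vi = 1%:M + u *m w by []. clearbody Vi.
pose P : 'M[F]_n := u *m u^T.
have eP : P = u *m u^T by []. clearbody P.
pose t := a^-1 - 1.
have et : t = a^-1 - 1 by []. clearbody t.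
pose D : 'M[F]_n := 1%:M + t *: P.
have eD : D = 1%:M + t *: P by []. clearbody D.
pose W := V *m D.
have eW : W = V *m D by []. clearbody W.
have uTu : u^T *m u = 1%:M.
  rewrite eu trmx_delta mul_delta_mx; apply/matrixP => x y.
  by rewrite !mxE !ord1 eqxx.
have ru : r *m u = a%:M.
  by rewrite eu -colE [col j r]mx11_scalar mxE.
have wu : w *m u = 0.
  by rewrite ew mulmxBl -scalemxAl ru uTu scale_scalar_mx mulVf // subrr.
have VVi : V *m Vi = 1%:M.
  rewrite eV eVi mulmxBl mul1mx mulmxDr mulmx1 -!mulmxA (mulmxA w u w) wu mul0mx mulmx0.
  by rewrite addr0 addrK.
have rV : r *m V = a *: u^T.
  rewrite eV mulmxBr mulmx1 mulmxA ru mul_scalar_mx ew scalerBr scalerA mulfV // scale1r.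
  by rewrite opprB addrC subrK.
have PP : P *m P = P by rewrite eP -mulmxA (mulmxA u^T u) uTu mul1mx.
have uTD : u^T *m D = a^-1 *: u^T.
  rewrite eD mulmxDr mulmx1 -scalemxAr eP mulmxA uTu mul1mx.
  by rewrite -{1}[u^T]scale1r -scalerDl et addrC subrK.
have rW : r *m W = u^T by rewrite eW mulmxA rV -scalemxAl uTD scalerA mulfV // scale1r.
have pu : properMx u by rewrite eu; exact: (@pmx_delta K n 1 j 0).
have puT : properMx u^T by rewrite eu trmx_delta; exact: (@pmx_delta K 1 n 0 j).
have pw : properMx w.
  rewrite ew; apply: pmx_sub => // x y; rewrite mxE (ord1 x) mulrC; exact: hj'.
have pV : properMx V by rewrite eV; apply: pmx_sub; [exact: pmx1 | exact: pmx_mul].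
have pVi : properMx Vi by rewrite eVi; apply: pmx_add; [exact: pmx1 | exact: pmx_mul].
have pP : properMx P by rewrite eP; exact: pmx_mul.
have pt : proper t by rewrite et; apply: prB => //; exact: (@pr1 K).
have pD : properMx D by rewrite eD; apply: pmx_add; [exact: pmx1 | exact: pmx_scale].
have pW : properMx W by rewrite eW; exact: pmx_mul.
have H2 : forall z : 'cV[F]_n, properMx z -> properMx ((R' *m W) *m z) ->
    properMx ((T *m W) *m z).
  move=> z hz h2; rewrite -mulmxA; apply: H' (pmx_mul pW hz) _ _.
    by rewrite mulmxA rW; exact: pmx_mul.
  by rewrite mulmxA.
have [C' [hC' hE]] := IH (R' *m W) (T *m W) H2.
pose E := T *m W - C' *m (R' *m W).
have eE : E = T *m W - C' *m (R' *m W) by []. clearbody E. rewrite -eE in hE.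
pose G := T - C' *m R'.
have eG : G = T - C' *m R' by []. clearbody G.
have EG : E = G *m W by rewrite eE eG mulmxBl mulmxA.
pose c : 'cV[F]_m := (1 - a^-1) *: (E *m u).
have ec : c = (1 - a^-1) *: (E *m u) by []. clearbody c.
have pc : properMx c.
  by rewrite ec; apply: pmx_scale; [apply: prB => //; exact: (@pr1 K) | exact: pmx_mul].
exists (row_mx c C'); split; first exact (pmx_row_mx pc hC').
rewrite (mul_row_col c C' r R').
have -> : T - (c *m r + C' *m R') = G - c *m r by rewrite eG opprD addrA addrAC.
pose X := G *m V *m P.
have eX : X = G *m V *m P by []. clearbody X.
have Eexp : E = G *m V + t *: X.
  by rewrite EG eW mulmxA eD mulmxDr mulmx1 -scalemxAr eX.
have EP : E *m P = (1 + t) *: X.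
  have XP : X *m P = X by rewrite eX -mulmxA PP.
  by rewrite Eexp mulmxDl -scalemxAl XP -eX scalerDl scale1r.
have key : (G - c *m r) *m V = E.
  rewrite mulmxBl -mulmxA rV -scalemxAr ec -scalemxAl -mulmxA -eP EP !scalerA.
  rewrite Eexp -scaleNr; congr (_ + (_ *: _)); rewrite et; exact: scal_aux.
have -> : G - c *m r = E *m Vi by rewrite -key -mulmxA VVi mulmx1.
exact: pmx_mul.
Qed.
End S.

Lemma colM_mx (R : pzSemiRingType) m n (G : 'I_n -> 'cV[R]_m) j :
  (\matrix_(i, k) G k i 0) *m delta_mx j 0 = G j.
Proof. by rewrite -colE; apply/matrixP => i k; rewrite !mxE (ord1 k). Qed.

Lemma colext (R : pzSemiRingType) m n (A B : 'M[R]_(m, n)) :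
  (forall j, A *m (delta_mx j 0 : 'cV_n) = B *m delta_mx j 0) -> A = B.
Proof.
move=> h; apply/matrixP => i j; move: (h j); rewrite -!colE => /matrixP /(_ i 0).
by rewrite !mxE.
Qed.

Unset Implicit Arguments.
Theorem theorem3p5 (K : fieldType) (n n1 : nat)
  (L : 'M[{poly K}]_n) (L1 : 'M[{poly K}]_n1)
  (Theta Theta1 : 'M[ratf K]_(n1, n)) :
  \det L != 0 -> \det L1 != 0 ->
  properMx Theta -> properMx Theta1 ->
  Theta *m polyF L = polyF L1 *m Theta1 ->
  ((forall y : 'cV[ratf K]_n1, properMx y ->
      exists x : 'cV[ratf K]_n, properMx x /\ rho L1 (Theta *m x) = rho L1 y)
   <->
   (exists (C : 'M[ratf K]_(n, n1)) (D : 'M[ratf K]_n1),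
      properMx C /\ properMx D /\
      Theta *m C + (sF K)^-1 *: (polyF L1 *m D) = 1%:M))
  /\
  ((forall x x' : 'cV[ratf K]_n, properMx x -> properMx x' ->
      rho L1 (Theta *m x) = rho L1 (Theta *m x') -> rho L x = rho L x')
   <->
   (exists (C : 'M[ratf K]_(n, n1)) (D : 'M[ratf K]_n),
      properMx C /\ properMx D /\
      C *m Theta1 + D *m ((sF K)^-1 *: polyF L) = 1%:M)).
Proof.
move=> dL dL1 pTh pTh1 eq.
have UL := polyF_unit dL; have UL1 := polyF_unit dL1.
have s0 := @s_neq0 K.
have rel : invmx (polyF L1) *m Theta = Theta1 *m invmx (polyF L).
  rewrite -[invmx (polyF L1) *m Theta]mulmx1 -(mulmxV UL) mulmxA -(mulmxA _ Theta) eq.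
  by rewrite mulmxA (mulVmx UL1) mul1mx.
split; split.
- move=> H.
  have ex : forall j : 'I_n1, exists x : 'cV[ratf K]_n,
      properMx x /\ rho L1 (Theta *m x) = rho L1 (delta_mx j 0).
    move=> j; apply: H; exact: (@pmx_delta K n1 1 j 0).
  have [X hX] := fin_all_exists ex.
  pose Y j := sF K *: (invmx (polyF L1) *m (delta_mx j 0 - Theta *m X j)).
  have hY : forall j, properMx (Y j).
    move=> j; rewrite /Y; have := proj2 (hX j) => e.
    have : rho L1 (delta_mx j 0 - Theta *m X j) = 0 by rewrite rhoB e subrr.
    by move/(rho_eq0 _ dL1).
  exists (\matrix_(i, j) X j i 0), (\matrix_(i, j) Y j i 0).
  split; first by move=> i j; rewrite mxE; exact: (proj1 (hX j) i 0).
  split; first by move=> i j; rewrite mxE; exact: (hY j i 0).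
  apply: colext => j; rewrite mulmxDl -!mulmxA colM_mx -scalemxAl -mulmxA colM_mx mul1mx.
  rewrite /Y -scalemxAr scalerA (mulVf s0) scale1r mulmxA (mulmxV UL1) mul1mx.
  by rewrite addrC subrK.
- move=> [C [D [hC [hD eCD]]]] y hy.
  exists (C *m y); split; first exact: pmx_mul.
  apply/eqP; rewrite eq_sym -subr_eq0 -rhoB; apply/eqP; apply/(rho_eq0 _ dL1).
  have -> : y - Theta *m (C *m y) = (1%:M - Theta *m C) *m y.
    by rewrite mulmxBl mul1mx mulmxA.
  rewrite -eCD addrAC subrr add0r /spropMx.
  have -> : sF K *: (invmx (polyF L1) *m ((sF K)^-1 *: (polyF L1 *m D) *m y)) = D *m y.
    rewrite -scalemxAl -scalemxAr scalerA (mulfV s0) scale1r !mulmxA.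
    by rewrite (mulVmx UL1) mul1mx.
  exact: pmx_mul.
- move=> H.
  pose R := sF K *: (Theta1 *m invmx (polyF L)).
  pose T := sF K *: invmx (polyF L).
  have cond : forall x : 'cV[ratf K]_n, properMx x -> properMx (R *m x) ->
      properMx (T *m x).
    move=> x hx hR.
    have e1 : rho L1 (Theta *m x) = rho L1 (Theta *m 0).
      rewrite mulmx0 rho0; apply/(rho_eq0 _ dL1).
      by rewrite /spropMx mulmxA rel scalemxAl.
    have := H x 0 hx (@pmx0 K n 1) e1; rewrite rho0 => /(rho_eq0 _ dL).
    by rewrite /spropMx scalemxAl.
  have [C [hC hD]] := claim cond.
  exists C, (T - C *m R); split; first exact: hC.
  split; first exact: hD.
  have hT : T *m ((sF K)^-1 *: polyF L) = 1%:M.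
    by rewrite /T -scalemxAl -scalemxAr scalerA (mulfV s0) scale1r (mulVmx UL).
  have hR : R *m ((sF K)^-1 *: polyF L) = Theta1.
    rewrite /R -scalemxAl -scalemxAr scalerA (mulfV s0) scale1r -mulmxA.
    by rewrite (mulVmx UL) mulmx1.
  by rewrite mulmxBl hT -mulmxA hR addrC subrK.
- move=> [C [D [hC [hD eCD]]]] x x' hx hx' e.
  apply/eqP; rewrite -subr_eq0 -rhoB; apply/eqP; apply/(rho_eq0 _ dL).
  have e0 : rho L1 (Theta *m (x - x')) = 0 by rewrite mulmxBr rhoB e subrr.
  move/(rho_eq0 _ dL1): e0; rewrite mulmxA rel -mulmxA => h.
  move: (x - x') (pmx_sub hx hx') h => z hz h.
  have [u eu] : {u | u = invmx (polyF L) *m z} by exists (invmx (polyF L) *m z).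
  rewrite -eu in h *.
  rewrite /spropMx in h *.
  have -> : sF K *: u = C *m (sF K *: (Theta1 *m u)) + D *m z.
    rewrite -{1}[u]mul1mx -eCD mulmxDl scalerDr -scalemxAr; congr (_ + _).
      by rewrite -mulmxA scalemxAr.
    rewrite -scalemxAl scalerA (mulfV s0) scale1r eu -mulmxA (mulmxA (polyF L)).
    by rewrite (mulmxV UL) mul1mx.
  by apply: pmx_add; apply: pmx_mul.
Qed.
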